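(* Consider the discrete-time system $x_{k+1}=f(x_k,u_k,w_k)$, $y_k=h(x_k,v_k)$ with $x_k\in\mathbb{X}\subset\mathbb{R}^n$, $u_k\in\mathbb{U}\subseteq\mathbb{R}^m$, $w_k\in\mathbb{R}^q$, $v_k\in\mathbb{V}\subset\mathbb{R}^r$, $y_k\in\mathbb{Y}\subset\mathbb{R}^p$, $f,h$ continuously differentiable, $\mathbb{Z}:=\mathbb{X}\times\mathbb{U}\times\mathbb{R}^q\times\mathbb{V}\times\mathbb{Y}$, and suppose it is strongly nonlinearly detectable. Let $\alpha_1,\alpha_2\in\mathcal{K}_\infty$, $\sigma_v,\sigma_y\in\mathcal{K}$, $\mu\in(0,1)$ and $V:\mathbb{X}\times\mathbb{X}\to\mathbb{R}_{\ge0}$ satisfy $\alpha_1(\|x-\widetilde{x}\|)\le V(x,\widetilde{x})\le\alpha_2(\|x-\widetilde{x}\|)$ and $V(f(x,u,w),f(\widetilde{x},u,\widetilde{w}))\le\mu V(x,\widetilde{x})+\sigma_v(\|v-\widetilde{v}\|)+\sigma_v(\|v^+-\widetilde{v}^+\|)+\sigma_y(\|y-\widetilde{y}\|)+\sigma_y(\|y^+-\widetilde{y}^+\|)$ for all $(x,u,w,v,y),(\widetilde{x},u,\widetilde{w},\widetilde{v},\widetilde{y})\in\mathbb{Z}$, $v^+,\widetilde{v}^+\in\mathbb{V}$ with $y=h(x,v)$, $\widetilde{y}=h(\widetilde{x},\widetilde{v})$, $y^+=h(f(x,u,w),v^+)\in\mathbb{Y}$, $\widetilde{y}^+=h(f(\widetilde{x},u,\widetilde{w}),\widetilde{v}^+)\in\mathbb{Y}$.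 Fix a horizon $N\in\mathbb{N}$, let $N_k:=\min(N,k)$, and define the moving horizon estimator $MHE_{N_k}$: given priors $\bar{x}_0\in\mathbb{X}$ and $\bar{v}_i\in\mathbb{V}$, at each $k\ge0$ minimize $$\mu^{N_k}\alpha_2(2\|\hat{x}_{k-N_k|k}-\hat{x}_{k-N_k}\|)+\sum_{j=0}^{N_k}2\mu^{j-1}\sigma_v(2\|\hat{v}_{k-j|k}-\bar{v}_{k-j}\|)+\sum_{j=0}^{N_k}2\mu^{j-1}\sigma_y(\|y_{k-j}-\hat{y}_{k-j|k}\|)$$ over $\hat{x}_{k-N_k|k}$, $(\hat{v}_{j|k})$, $(\hat{w}_{j|k})$ subject to $\hat{x}_{j+1|k}=f(\hat{x}_{j|k},u_j,\hat{w}_{j|k})$ for $j\in\{k-N_k,\dots,k-1\}$ and $\hat{y}_{j|k}=h(\hat{x}_{j|k},\hat{v}_{j|k})$, $\hat{x}_{j|k}\in\mathbb{X}$, $\hat{v}_{j|k}\in\mathbb{V}$, $\hat{w}_{j|k}\in\mathbb{R}^q$, $\hat{y}_{j|k}\in\mathbb{Y}$ for $j\in\{k-N_k,\dots,k\}$; the estimate is $\hat{x}^\star_{k|k}$ from an optimal solution, and the priors are $\hat{x}_0:=\bar{x}_0$ and $\hat{x}_k:=\hat{x}^\star_{k|k}$ for $k>0$. If $N$ is such that there is $\rho\in(0,1)$ with $$2\mu^N\alpha_2\big(2\alpha_1^{-1}(r)\big)<\rho r\quad\text{for all } r\in(0,\infty),$$ then $MHE_{N_k}$ is an unknown input state esti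mator.
   Context: A solution of the system is a sequence in $\mathbb{Z}^\infty$ satisfying the system equations. $\mathcal{K}$, $\mathcal{K}_\infty$, $\mathcal{KL}$ are the usual comparison function classes; a $\mathcal{KL}$-function $\beta$ is summable if there is $\alpha\in\mathcal{K}$ with $\sum_{k\ge0}\beta(r,k)\le\alpha(r)$ for all $r\ge0$. Strong nonlinear detectability: there exist $\alpha\in\mathcal{K}_\infty$, $\alpha_0\in\mathcal{KL}$, summable $\alpha_v,\alpha_y\in\mathcal{KL}$ with $\alpha(\|x_k-\widetilde{x}_k\|)\le\alpha_0(\|x_0-\widetilde{x}_0\|,k)+\sum_{i=0}^k(\alpha_v(\|v_{k-i}-\widetilde{v}_{k-i}\|,i)+\alpha_y(\|y_{k-i}-\widetilde{y}_{k-i}\|,i))$ for all $k\ge0$ and all pairs of solutions sharing the same control input sequence. A state estimator is a sequence of maps $\hat{x}_k=\Psi_k(\bar{x}_0,\bar{\boldsymbol{v}}_{[0,k]},\boldsymbol{u}_{[0,k-1]},\boldsymbol{y}_{[0,k]})$; it is an unknown input state estimator if there exist $\beta\in\mathcal{K}_\infty$, $\beta_0\in\mathcal{KL}$ and a summable $\beta_v\in\mathcal{KL}$ such that $\beta(\|x_k-\hat{x}_k\|)\le\beta_0(\|x_0-\bar{x}_0\|,k)+\sum_{i=0}^k\beta_v(\|v_{k-i}-\bar{v}_{k-i}\|,i)$ for all $k\ge0$, all priors and every trajectory of the system. *)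

(* Defs.v *)
From HB Require Import structures.
From mathcomp Require Import all_boot all_order all_algebra.
From mathcomp Require Import all_classical all_reals all_analysis.
Set Implicit Arguments. Unset Strict Implicit. Unset Printing Implicit Defensive.
Import Order.TTheory GRing.Theory Num.Theory.
Import numFieldNormedType.Exports.
Local Open Scope classical_set_scope.
Local Open Scope ring_scope.

Section Defs.
Variable R : realType.

Definition classK (a : R -> R) : Prop :=
  [/\ a 0 = 0,
      {within [set x : R | 0 <= x], continuous a} &
      forall s t : R, 0 <= s -> s < t -> a s < a t].

Definition classKinf (a : R -> R) : Prop :=
  classK a /\ (a x @[x --> +oo] --> +oo).

Definition classKL (b : R -> nat -> R) : Prop :=
  (forall t : nat, classK (fun r => b r t)) /\
  (forall r : R, 0 <= r ->
     (forall t : nat, b r t.+1 <= b r t) /\ (b r t @[t --> \oo] --> 0)).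

Definition summableKL (b : R -> nat -> R) : Prop :=
  classKL b /\ exists a : R -> R, classK a /\
    forall r : R, 0 <= r -> forall T : nat, \sum_(k < T) b r k <= a r.

Definition Kinv (a : R -> R) (r : R) : R := xget 0 [set s : R | 0 <= s /\ a s = r].

Definition C1 (U W : normedModType R) (F : U -> W) : Prop :=
  (forall z, differentiable F z) /\ (forall d : U, continuous (fun z => 'd F z d)).

End Defs.

Section System.
Variable R : realType.
Variables (n m q r p : nat).
Variable f : 'rV[R]_n -> 'rV[R]_m -> 'rV[R]_q -> 'rV[R]_n.
Variable h : 'rV[R]_n -> 'rV[R]_r -> 'rV[R]_p.
Variables (Xs : set 'rV[R]_n) (Us : set 'rV[R]_m) (Vs : set 'rV[R]_r) (Ys : set 'rV[R]_p).

(* f and h continuously differentiable (as maps on the product spaces) *)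
Definition f_unc (z : 'rV[R]_n * 'rV[R]_m * 'rV[R]_q) : 'rV[R]_n := f z.1.1 z.1.2 z.2.
Definition h_unc (z : 'rV[R]_n * 'rV[R]_r) : 'rV[R]_p := h z.1 z.2.

Definition solution (x : nat -> 'rV[R]_n) (u : nat -> 'rV[R]_m) (w : nat -> 'rV[R]_q)
    (v : nat -> 'rV[R]_r) (y : nat -> 'rV[R]_p) : Prop :=
  forall k : nat, [/\ Xs (x k), Us (u k), Vs (v k) & Ys (y k)] /\
                  x k.+1 = f (x k) (u k) (w k) /\ y k = h (x k) (v k).

Definition strongly_nonlinearly_detectable : Prop :=
  exists (al : R -> R) (al0 alv aly : R -> nat -> R),
    [/\ classKinf al, classKL al0, summableKL alv, summableKL aly &
    forall x u w v y xt wt vt yt,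
      solution x u w v y -> solution xt u wt vt yt ->
      forall k : nat,
        al `|x k - xt k| <= al0 `|x 0 - xt 0| k
          + \sum_(i < k.+1) (alv `|v (k - i)%N - vt (k - i)%N| i
                             + aly `|y (k - i)%N - yt (k - i)%N| i)].

Variables (mu : R) (al2 sigv sigy : R -> R) (N : nat).
Variables (xbar0 : 'rV[R]_n) (vbar : nat -> 'rV[R]_r).
Variables (u : nat -> 'rV[R]_m) (y : nat -> 'rV[R]_p).

Definition Nk (k : nat) : nat := minn N k.

(* decision variables at time k: xhat_{k-N_k|k}, (vhat_{j|k})_j, (what_{j|k})_j,
   the latter two indexed by absolute time j *)
Definition cand : Type := ('rV[R]_n * (nat -> 'rV[R]_r) * (nat -> 'rV[R]_q))%type.

(* xpred c t i = xhat_{t+i|k}, predicted from xhat_{t|k} = c.1.1 *)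
Fixpoint xpred (c : cand) (t i : nat) : 'rV[R]_n :=
  match i with
  | 0 => c.1.1
  | i'.+1 => f (xpred c t i') (u (t + i')%N) (c.2 (t + i')%N)
  end.

Definition feasible (k : nat) (c : cand) : Prop :=
  forall i : nat, (i <= Nk k)%N ->
    [/\ Xs (xpred c (k - Nk k)%N i), Vs (c.1.2 (k - Nk k + i)%N) &
        Ys (h (xpred c (k - Nk k)%N i) (c.1.2 (k - Nk k + i)%N))].

Definition mhe_cost (k : nat) (prior : 'rV[R]_n) (c : cand) : R :=
  mu ^+ Nk k * al2 (2 * `|c.1.1 - prior|)
  + \sum_(j < (Nk k).+1) 2 * mu ^ (j%:Z - 1) * sigv (2 * `|c.1.2 (k - j)%N - vbar (k - j)%N|)
  + \sum_(j < (Nk k).+1) 2 * mu ^ (j%:Z - 1)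
        * sigy `|y (k - j)%N - h (xpred c (k - Nk k)%N (Nk k - j)%N) (c.1.2 (k - j)%N)|.

Definition mhe_estimate (sol : nat -> cand) (k : nat) : 'rV[R]_n :=
  xpred (sol k) (k - Nk k)%N (Nk k).

Definition mhe_prior (sol : nat -> cand) (t : nat) : 'rV[R]_n :=
  if t == 0%N then xbar0 else mhe_estimate sol t.

Definition mhe_run (sol : nat -> cand) : Prop :=
  forall k : nat, feasible k (sol k) /\
    forall c : cand, feasible k c ->
      mhe_cost k (mhe_prior sol (k - Nk k)%N) (sol k)
        <= mhe_cost k (mhe_prior sol (k - Nk k)%N) c.

End System.

(* Main.v *)
Set Warnings "-all".
Require Import Defs.
From HB Require Import structures.
From mathcomp Require Import all_boot all_order all_algebra.
From mathcomp Require Import all_classical all_reals all_analysis.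
From mathcomp Require Import ring lra zify.
Set Implicit Arguments. Unset Strict Implicit. Unset Printing Implicit Defensive.
Import Order.TTheory GRing.Theory Num.Theory.
Import numFieldNormedType.Exports.
Local Open Scope classical_set_scope.
Local Open Scope ring_scope.
Section KLem.
Variable R : realType.
Implicit Types (a : R -> R).

Lemma K_ge0 a s : classK a -> 0 <= s -> 0 <= a s.
Proof.
case=> a0 _ am; rewrite le_eqVlt => /orP[/eqP<-|s0]; first by rewrite a0.
by rewrite -a0 ltW // am.
Qed.

Lemma K_pos a s : classK a -> 0 < s -> 0 < a s.
Proof. by case=> a0 _ am s0; rewrite -a0 am. Qed.

Lemma K_le a s t : classK a -> 0 <= s -> s <= t -> a s <= a t.
Proof.
case=> a0 _ am s0; rewrite le_eqVlt => /orP[/eqP->//|st].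
by rewrite ltW // am.
Qed.

Lemma K_le_inv a s t : classK a -> 0 <= t -> a s <= a t -> 0 <= s -> s <= t.
Proof.
move=> Ka t0 ast s0; rewrite leNgt; apply/negP => ts.
case: Ka => _ _ am; have := am _ _ t0 ts; lra.
Qed.

Lemma K_sum a s t : classK a -> 0 <= s -> 0 <= t -> a (s + t) <= a (2 * s) + a (2 * t).
Proof.
move=> Ka s0 t0.
have h2s : 0 <= a (2 * s) by apply: K_ge0 Ka _; lra.
have h2t : 0 <= a (2 * t) by apply: K_ge0 Ka _; lra.
have [st|ts] := leP s t.
  have H : s + t <= 2 * t by lra.
  have : a (s + t) <= a (2 * t) by apply: K_le Ka _ H; lra.
  lra.
have H : s + t <= 2 * s by lra.
have : a (s + t) <= a (2 * s) by apply: K_le Ka _ H; lra.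
lra.
Qed.

Lemma within_scale a b : 0 < b ->
  {within [set x : R | 0 <= x], continuous a} ->
  {within [set x : R | 0 <= x], continuous (fun s => a (b * s))}.
Proof.
move=> b0; rewrite !subspace_continuousP => ca x x0.
have h1 : (fun s => b * s) @ within [set x : R | 0 <= x] (nbhs x)
    --> within [set x : R | 0 <= x] (nbhs (b * x)).
  move=> P /=; rewrite /within /= => HP.
  have cb : (fun s => b * s) @ nbhs x --> b * x.
    by apply: cvgMl_tmp; apply: cvg_id.
  have := cb _ HP; rewrite /= nbhs_simpl => HQ.
  change (nbhs x (fun s => 0 <= s -> P (b * s))).
  have HQ' : nbhs x (fun s => 0 <= b * s -> P (b * s)) := HQ.
  apply: (filterS _ HQ') => y /= Hy y0; apply: Hy.
  by rewrite mulr_ge0 // ltW.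
have bx0 : [set x0 : R | 0 <= x0] (b * x) by rewrite /=; move: x0 => /= x0; nra.
have c2 := ca _ bx0.
move: c2; rewrite /from_subspace => c2.
exact: (@cvg_comp _ _ _ (fun s => b * s) a _ _ _ h1 c2).
Qed.

Lemma K_scale a c b : classK a -> 0 < c -> 0 < b -> classK (fun s => c * a (b * s)).
Proof.
move=> Ka c0 b0; have Ka' := Ka; case: Ka' => a0 ac am; split.
- by rewrite mulr0 a0 mulr0.
- have := within_scale b0 ac; rewrite !subspace_continuousP => H x x0.
  by apply: cvgMl_tmp; exact: H.
- move=> s t s0 st; rewrite ltr_pM2l //; apply: am.
    nra.
  nra.
Qed.

Lemma Kinf_surj a y : classKinf a -> 0 <= y -> exists t, 0 <= t /\ a t = y.
Proof.
case=> Ka ainf y0.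
have H1 : \forall t \near +oo, y <= a t by apply: cvgry_ge.
have H2 : \forall t \near +oo, (0:R) <= t := nbhs_pinfty_ge (num_real 0).
have [b [yb b0]] := @filter_ex _ _ (@proper_pinfty_nbhs R) _ (filterI H1 H2).
case: (Ka) => a0 ac _.
have := @IVT R a 0 b y b0 (continuous_subspaceW _ ac).
case.
- by move=> z /=; rewrite in_itv /= => /andP[].
- rewrite a0; have ab := K_ge0 Ka b0.
  by rewrite ge_min le_max y0 yb orbT.
by move=> c; rewrite in_itv /= => /andP[c0 _] <-; exists c.
Qed.

Lemma Kinv_spec a y : classKinf a -> 0 <= y ->
  0 <= Kinv a y /\ a (Kinv a y) = y.
Proof.
move=> Ka y0; have [t Ht] := Kinf_surj Ka y0.
by have := @xgetPex _ 0 [set s | 0 <= s /\ a s = y] (ex_intro _ t Ht).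
Qed.

End KLem.
Section KL.
Variable R : realType.
Lemma KL_geo (a : R -> R) C lam : classK a -> 0 < C -> 0 < lam < 1 ->
  classKL (fun s t => C * lam ^+ t * a (2 * s)).
Proof.
move=> Ka C0 /andP[l0 l1]; split.
  move=> t; apply: K_scale => //; first by rewrite mulr_gt0 // exprn_gt0.
move=> s s0; have A0 : 0 <= a (2 * s) by apply: K_ge0 => //; lra.
split.
  move=> t; rewrite exprS.
  have : 0 <= lam ^+ t by rewrite exprn_ge0 // ltW.
  move=> Lt; rewrite -!mulrA ler_pM2l // mulrA ler_wpM2r //.
  rewrite ler_piMl //; lra.
have E : (fun t => C * lam ^+ t * a (2 * s)) = (fun t => geometric (C * a (2 * s)) lam t).
  by apply: funext => t /=; rewrite /geometric /=; rewrite mulrAC.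
rewrite /= E; apply: cvg_geometric.
by rewrite ger0_norm ?ltW.
Qed.

Lemma sum_geo (lam : R) T : 0 <= lam < 1 -> \sum_(k < T) lam ^+ k <= (1 - lam)^-1.
Proof.
move=> /andP[l0 l1].
have E : \sum_(k < T) lam ^+ k * (1 - lam) = 1 - lam ^+ T.
  elim: T => [|T IH]; first by rewrite big_ord0 expr0 subrr.
  rewrite big_ord_recr /= IH exprS; ring.
have lT : 0 <= lam ^+ T by rewrite exprn_ge0.
rewrite -(@ler_pM2r _ (1 - lam)); last lra.
rewrite mulr_suml E mulVf; last lra.
lra.
Qed.

Lemma summable_geo (a : R -> R) C lam : classK a -> 0 < C -> 0 < lam < 1 ->
  summableKL (fun s t => C * lam ^+ t * a (2 * s)).
Proof.
move=> Ka C0 hl; split; first exact: KL_geo.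
have /andP[l0 l1] := hl.
exists (fun s => C * (1 - lam)^-1 * a (2 * s)); split.
  apply: K_scale => //.
  by rewrite mulr_gt0 // invr_gt0 subr_gt0.
move=> s s0 T.
have A0 : 0 <= a (2 * s) by apply: K_ge0 => //; lra.
rewrite (eq_bigr (fun k : 'I_T => lam ^+ k * (C * a (2 * s)))); last first.
  by move=> i _; ring.
rewrite -mulr_suml.
have -> : C / (1 - lam) * a (2 * s) = (1 - lam)^-1 * (C * a (2 * s)) by ring.
rewrite ler_wpM2r //; first by rewrite mulr_ge0 // ltW.
by apply: sum_geo; rewrite ltW.
Qed.

Lemma bern (a : R) N : 0 <= a <= 1 -> 1 - N%:R * a <= (1 - a) ^+ N.
Proof.
move=> /andP[a0 a1]; elim: N => [|N IH]; first by rewrite expr0 mul0r subr0.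
rewrite exprS -natr1.
have n0 : 0 <= N%:R :> R by [].
have X0 : 0 <= (1 - a) ^+ N by rewrite exprn_ge0 //; lra.
nra.
Qed.
End KL.

Lemma powz (R : realType) (mu : R) (j : nat) : mu != 0 -> mu ^ (j%:Z - 1) = mu ^+ j / mu.
Proof. by move=> mu0; rewrite expfzDr // exprN1 -exprnP. Qed.

Section MHE.
Variable R : realType.
Variables n m q r p : nat.
Variable f : 'rV[R]_n -> 'rV[R]_m -> 'rV[R]_q -> 'rV[R]_n.
Variable h : 'rV[R]_n -> 'rV[R]_r -> 'rV[R]_p.
Variables (Xs : set 'rV[R]_n) (Us : set 'rV[R]_m) (Vs : set 'rV[R]_r) (Ys : set 'rV[R]_p).
Variables (al2 sigv sigy : R -> R) (mu : R) (Vf : 'rV[R]_n -> 'rV[R]_n -> R).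
Hypotheses (Hal2 : classK al2) (Hsigv : classK sigv) (Hsigy : classK sigy).
Hypothesis Hmu : 0 < mu < 1.
Hypothesis HVsand : forall x xt, Xs x -> Xs xt -> Vf x xt <= al2 `|x - xt|.
Hypothesis HVdec : forall x uu w v yy xt wt vt yt vp vtp,
      Xs x -> Us uu -> Vs v -> Ys yy ->
      Xs xt -> Vs vt -> Ys yt ->
      Vs vp -> Vs vtp ->
      yy = h x v -> yt = h xt vt ->
      Ys (h (f x uu w) vp) -> Ys (h (f xt uu wt) vtp) ->
      Vf (f x uu w) (f xt uu wt)
        <= mu * Vf x xt + sigv `|v - vt| + sigv `|vp - vtp|
           + sigy `|yy - yt| + sigy `|h (f x uu w) vp - h (f xt uu wt) vtp|.
Variable N : nat.
Variables (xbar0 : 'rV[R]_n) (vbar : nat -> 'rV[R]_r).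
Variables (x : nat -> 'rV[R]_n) (u : nat -> 'rV[R]_m) (w : nat -> 'rV[R]_q)
  (v : nat -> 'rV[R]_r) (y : nat -> 'rV[R]_p).
Hypothesis Hsol : solution f h Xs Us Vs Ys x u w v y.
Variable sol : nat -> cand R n q r.
Hypothesis Hrun : mhe_run f h Xs Vs Ys mu al2 sigv sigy N xbar0 vbar u y sol.

Local Notation est k := (mhe_estimate f N u sol k).
Local Notation P t := (mhe_prior f N xbar0 u sol t).
Local Notation s_ t := (sigv (2 * `|v t - vbar t|)).
Local Notation D k := (\sum_(j < (Nk N k).+1) 4 * mu ^+ j / mu * s_ (k - j)%N).

Lemma one_step k : Vf (x k) (est k) <=
  2 * mu ^+ (Nk N k) * al2 (2 * `|x (k - Nk N k)%N - P (k - Nk N k)%N|) + D k.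
Proof.
have /andP[mu0 mu1] := Hmu.
have mun0 : mu != 0 by rewrite gt_eqF.
have [Hfeas Hopt] := Hrun k.
set M := Nk N k.
have Mk : (M <= k)%N by rewrite /M /Nk geq_minr.
set t0 := (k - M)%N.
set c := sol k.
pose xh i := xpred f u c t0 i.
pose vh := c.1.2.
pose a_ l := sigv `|v (t0 + l)%N - vh (t0 + l)%N| + sigy `|y (t0 + l)%N - h (xh l) (vh (t0 + l)%N)|.
have a_ge0 l : 0 <= a_ l.
  by rewrite addr_ge0 // K_ge0.
have chain : forall i, (i <= M)%N -> Vf (x (t0 + i)%N) (xh i) + a_ i / mu <=
    mu ^+ i * Vf (x t0) (xh 0%N) + \sum_(j < i.+1) 2 * mu ^+ j / mu * a_ (i - j)%N.
  elim=> [_|i IH iM].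
    rewrite big_ord_recl big_ord0 addn0 expr0 mul1r /= subn0 addr0.
    have := a_ge0 0%N; have : 0 <= a_ 0%N / mu by rewrite divr_ge0 // ltW.
    lra.
  have iM' : (i <= M)%N by apply: ltnW.
  have IHi := IH iM'.
  have [[Xx Uu Vv Yy] [xS yE]] := Hsol (t0 + i)%N.
  have [[_ _ Vv1 Yy1] [_ yE1]] := Hsol (t0 + i).+1.
  have [Xh Vh Yh] := Hfeas i iM'.
  have [_ Vh1 Yh1] := Hfeas i.+1 iM.
  rewrite -addnS in Vv1 Yy1 yE1 xS.
  have Hd := @HVdec (x (t0 + i)%N) (u (t0 + i)%N) (w (t0 + i)%N) (v (t0 + i)%N) (y (t0 + i)%N)
     (xh i) (c.2 (t0 + i)%N) (vh (t0 + i)%N) (h (xh i) (vh (t0 + i)%N))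
     (v (t0 + i.+1)) (vh (t0 + i.+1)%N) Xx Uu Vv Yy Xh Vh Yh Vv1 Vh1 yE erefl.
  rewrite -xS -yE1 in Hd.
  have Hd' := Hd Yy1 Yh1.
  rewrite big_ord_recl /= subn0.
  have HdA : Vf (x (t0 + i.+1)%N) (xh i.+1) <= mu * Vf (x (t0 + i)%N) (xh i) + a_ i + a_ i.+1.
    rewrite /a_; move: Hd'; rewrite /xh /=; lra.
  have ES : \sum_(i0 < i.+1) 2 * mu ^+ bump 0 i0 / mu * a_ (i.+1 - bump 0 i0)%N
      = mu * \sum_(j < i.+1) 2 * mu ^+ j / mu * a_ (i - j)%N.
    rewrite mulr_sumr; apply: eq_bigr => j _.
    rewrite /bump leq0n add1n subSS exprS; ring.
  rewrite ES expr0 exprS.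
  set S := \sum_(j < i.+1) _.
  move: HdA; set V0 := Vf (x t0) (xh 0%N).
  set V1 := Vf (x (t0 + i)%N) (xh i).
  set V2 := Vf (x (t0 + i.+1)%N) (xh i.+1) => HdA.
  have e1 : mu * (a_ i / mu) = a_ i by field.
  have e2 : a_ i.+1 <= a_ i.+1 / mu.
    rewrite ler_pdivlMr //; have := a_ge0 i.+1; nra.
  have IHm : mu * (V1 + a_ i / mu) <= mu * (mu ^+ i * V0 + S).
    by rewrite ler_pM2l.
  have e3 : 2 * 1 / mu * a_ i.+1 = 2 * (a_ i.+1 / mu) by field.
  rewrite e3; move: IHm; rewrite mulrDr e1 => IHm.
  have e4 : mu * (mu ^+ i * V0 + S) = mu * mu ^+ i * V0 + mu * S by ring.
  lra.
have tk : (t0 + M)%N = k by rewrite /t0 subnK.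
have idx : forall j : 'I_M.+1, (t0 + (M - j))%N = (k - j)%N.
  move=> j; have := ltn_ord j; rewrite /t0; lia.
have HM := chain M (leqnn M).
rewrite tk in HM.
have aM : 0 <= a_ M / mu by rewrite divr_ge0 // ltW.
pose cs : cand R n q r := ((x t0, v), w).
have xs_eq : forall i, xpred f u cs t0 i = x (t0 + i)%N.
  elim => [|i IH] /=; first by rewrite addn0.
  rewrite IH addnS; have [_ [xS _]] := Hsol (t0 + i)%N; by rewrite xS.
have Fs : feasible f h Xs Vs Ys N u k cs.
  move=> i iM; rewrite -/M -/t0 xs_eq /=.
  have [[X _ V Y] [_ yE]] := Hsol (t0 + i)%N.
  by split => //; rewrite -yE.
pose SV := \sum_(j < M.+1) 2 * mu ^+ j / mu * s_ (k - j)%N.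
pose CV := \sum_(j < M.+1) 2 * mu ^ (j%:Z - 1) * sigv (2 * `|c.1.2 (k - j)%N - vbar (k - j)%N|).
pose CY := \sum_(j < M.+1) 2 * mu ^ (j%:Z - 1)
        * sigy `|y (k - j)%N - h (xpred f u c t0 (M - j)%N) (c.1.2 (k - j)%N)|.
pose SVz := \sum_(j < M.+1) 2 * mu ^ (j%:Z - 1) * s_ (k - j)%N.
pose YS := \sum_(j < M.+1) 2 * mu ^ (j%:Z - 1)
        * sigy `|y (k - j)%N - h (xpred f u cs t0 (M - j)%N) (cs.1.2 (k - j)%N)|.
have Hc : mu ^+ M * al2 (2 * `|c.1.1 - P t0|) + CV + CY
        <= mu ^+ M * al2 (2 * `|x t0 - P t0|) + SVz + YS := Hopt cs Fs.
have SVE : SVz = SV.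
  rewrite /SVz /SV; apply: eq_bigr => j _; rewrite powz //; ring.
have YS0 : YS = 0.
  rewrite /YS; apply: big1 => jj _; rewrite xs_eq (idx jj) /=.
  have [_ [_ yE]] := Hsol (k - jj)%N.
  have [sy0 _ _] := Hsigy.
  by rewrite -yE subrr normr0 sy0 mulr0.
pose CH := \sum_(j < M.+1) 2 * mu ^+ j / mu * a_ (M - j)%N.
have CHb : CH <= SV + CV + CY.
  rewrite /SV /CV /CY -!big_split /=; apply: ler_sum => jj _.
  rewrite powz // /a_ (idx jj) /xh /vh.
  set vv := `|v (k - jj)%N - c.1.2 (k - jj)%N|.
  have tri : vv <= `|v (k - jj)%N - vbar (k - jj)%N| + `|c.1.2 (k - jj)%N - vbar (k - jj)%N|.
    by rewrite /vv (distrC (c.1.2 (k - jj)%N)); exact: ler_distD.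
  have K1 : sigv vv <= sigv (`|v (k - jj)%N - vbar (k - jj)%N| + `|c.1.2 (k - jj)%N - vbar (k - jj)%N|).
    exact: K_le Hsigv (normr_ge0 _) tri.
  have K2 := K_sum Hsigv (normr_ge0 (v (k - jj)%N - vbar (k - jj)%N)) (normr_ge0 (c.1.2 (k - jj)%N - vbar (k - jj)%N)).
  have cp : 0 <= 2 * mu ^+ jj / mu by rewrite divr_ge0 ?mulr_ge0 ?exprn_ge0 // ltW.
  set YY := sigy _.
  set A1 := sigv (2 * _); set A2 := sigv (2 * _).
  have K3 : sigv vv <= A1 + A2 by rewrite /A1 /A2; lra.
  have := ler_wpM2l cp K3; rewrite !mulrDr; lra.
have X0 : Xs (x t0) by have [[]] := Hsol t0.
have Xh0 : Xs (xh 0%N) by have [] := Hfeas 0%N (leq0n _).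
have V0b : Vf (x t0) (xh 0%N) <= al2 (2 * `|x t0 - P t0|) + al2 (2 * `|c.1.1 - P t0|).
  apply: le_trans (HVsand X0 Xh0) _.
  apply: le_trans (K_sum Hal2 (normr_ge0 _) (normr_ge0 _)).
  apply: K_le => //; rewrite (distrC c.1.1); exact: ler_distD.
have mM : 0 <= mu ^+ M by rewrite exprn_ge0 // ltW.
have := ler_wpM2l mM V0b; rewrite mulrDr => V0b'.
change (est k) with (xh M).
rewrite [X in _ <= _ + X](_ : _ = SV + SV); last first.
  rewrite /SV -big_split; apply: eq_bigr => jj _ /=; ring.
move: HM Hc; rewrite SVE YS0 -/CH; lra.
Qed.
End MHE.
Lemma sum_comb (R : realType) (g d S : nat -> R) (rho : R) (N K : nat) :
  0 <= rho -> (forall t, 0 <= S t) ->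
  (forall j, (j < N)%N -> d j <= g j) ->
  rho * g 0%N + d N <= g N ->
  (forall i, rho * g i.+1 <= g (N + i.+1)%N) ->
  rho * (\sum_(i < K.+1) g i * S (K - i)%N) + \sum_(j < N.+1) d j * S (N + K - j)%N
   <= \sum_(i < (N + K).+1) g i * S (N + K - i)%N.
Proof.
move=> r0 S0 Hd HN Hg.
rewrite -addnS big_split_ord /=.
have L1 : \sum_(j < N.+1) d j * S (N + K - j)%N
    = \sum_(j < N) d j * S (N + K - j)%N + d N * S K.
  by rewrite big_ord_recr /= addKn.
have L2 : \sum_(i < K.+1) g i * S (K - i)%N
    = g 0%N * S K + \sum_(i < K) g i.+1 * S (K - i.+1)%N.
  by rewrite big_ord_recl /= subn0.
have R2 : \sum_(i < K.+1) g (N + i)%N * S (N + K - (N + i))%N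
    = g N * S K + \sum_(i < K) g (N + i.+1)%N * S (K - i.+1)%N.
  rewrite big_ord_recl /= addn0 addKn; congr (_ + _).
  by apply: eq_bigr => i _; rewrite /bump leq0n add1n subnDl.
rewrite L1 L2 R2.
have T1 : \sum_(j < N) d j * S (N + K - j)%N <= \sum_(i < N) g i * S (N + K - i)%N.
  by apply: ler_sum => i _; apply: ler_wpM2r => //; apply: Hd.
have T2 : rho * \sum_(i < K) g i.+1 * S (K - i.+1)%N
    <= \sum_(i < K) g (N + i.+1)%N * S (K - i.+1)%N.
  rewrite mulr_sumr; apply: ler_sum => i _; rewrite mulrA.
  by apply: ler_wpM2r => //; apply: Hg.
have T3 : (rho * g 0%N + d N) * S K <= g N * S K by apply: ler_wpM2r.
move: T3; rewrite mulrDl mulrDr; lra.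
Qed.
Lemma HNlink (R : realType) (n : nat) (Xs : set 'rV[R]_n) (al1 al2 : R -> R)
  (Vf : 'rV[R]_n -> 'rV[R]_n -> R) (mu rho : R) (N : nat) (xx P : 'rV[R]_n) :
  classKinf al1 -> classK al2 -> 0 < mu ->
  (forall x xt, Xs x -> Xs xt -> al1 `|x - xt| <= Vf x xt) ->
  (forall s : R, 0 < s -> 2 * mu ^+ N * al2 (2 * Kinv al1 s) < rho * s) ->
  Xs xx -> Xs P -> 2 * mu ^+ N * al2 (2 * `|xx - P|) <= rho * Vf xx P.
Proof.
move=> Ka1 Ka2 mu0 Hs HN Xx XP.
have Ka1' := Ka1.1.
have H1 := Hs _ _ Xx XP.
have d0 := normr_ge0 (xx - P).
have V0 : 0 <= Vf xx P := le_trans (K_ge0 Ka1' d0) H1.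
have mN : 0 <= 2 * mu ^+ N by rewrite mulr_ge0 // exprn_ge0 // ltW.
move: V0; rewrite le_eqVlt => /orP[/eqP V0|Vp].
  have dz : `|xx - P| = 0.
    apply/eqP; rewrite eq_le d0 andbT leNgt; apply/negP => dp.
    have := K_pos Ka1' dp; lra.
  have [a0 _ _] := Ka2.
  by rewrite dz mulr0 a0 mulr0 -V0 mulr0.
have [T0 T1] := Kinv_spec Ka1 (ltW Vp).
have dT : `|xx - P| <= Kinv al1 (Vf xx P).
  by apply: (K_le_inv Ka1' T0) => //; rewrite T1.
have A1 : al2 (2 * `|xx - P|) <= al2 (2 * Kinv al1 (Vf xx P)).
  apply: K_le => //; lra.
have := HN _ Vp; have := ler_wpM2l mN A1; lra.
Qed.

Lemma helper1 (R : realType) (m l A rho : R) : 0 <= A -> 0 <= m -> m <= 1 -> 0 <= rho ->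
  (1 + rho) / 2 <= l -> 2 * m * A <= 4 * l * A.
Proof. move=> A0 m0 m1 r0 hl; nra. Qed.

Lemma helper2 (R : realType) (E a b W c e c' e' rho : R) :
  E <= a + b -> a <= rho * W -> W <= c + e -> rho * c <= c' -> rho * e + b <= e' ->
  0 <= rho -> E <= c' + e'.
Proof. move=> H1 H2 H3 H4 H5 H6; have := ler_wpM2l H6 H3; rewrite mulrDr; lra. Qed.

Theorem theorem3 (R : realType) (n m q r p : nat)
  (f : 'rV[R]_n -> 'rV[R]_m -> 'rV[R]_q -> 'rV[R]_n)
  (h : 'rV[R]_n -> 'rV[R]_r -> 'rV[R]_p)
  (Xs : set 'rV[R]_n) (Us : set 'rV[R]_m) (Vs : set 'rV[R]_r) (Ys : set 'rV[R]_p)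
  (Hf : C1 (f_unc f)) (Hh : C1 (h_unc h))
  (Hdet : strongly_nonlinearly_detectable f h Xs Us Vs Ys)
  (al1 al2 sigv sigy : R -> R) (mu : R) (Vf : 'rV[R]_n -> 'rV[R]_n -> R)
  (Hal1 : classKinf al1) (Hal2 : classKinf al2)
  (Hsigv : classK sigv) (Hsigy : classK sigy)
  (Hmu : 0 < mu < 1)
  (HVnn : forall x xt, Xs x -> Xs xt -> 0 <= Vf x xt)
  (HVsand : forall x xt, Xs x -> Xs xt ->
      al1 `|x - xt| <= Vf x xt /\ Vf x xt <= al2 `|x - xt|)
  (HVdec : forall x uu w v yy xt wt vt yt vp vtp,
      Xs x -> Us uu -> Vs v -> Ys yy ->
      Xs xt -> Vs vt -> Ys yt ->
      Vs vp -> Vs vtp ->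
      yy = h x v -> yt = h xt vt ->
      Ys (h (f x uu w) vp) -> Ys (h (f xt uu wt) vtp) ->
      Vf (f x uu w) (f xt uu wt)
        <= mu * Vf x xt + sigv `|v - vt| + sigv `|vp - vtp|
           + sigy `|yy - yt| + sigy `|h (f x uu w) vp - h (f xt uu wt) vtp|)
  (N : nat)
  (HN : exists rho : R, 0 < rho < 1 /\
        forall s : R, 0 < s -> 2 * mu ^+ N * al2 (2 * Kinv al1 s) < rho * s) :
  exists (be : R -> R) (be0 bev : R -> nat -> R),
    [/\ classKinf be, classKL be0, summableKL bev &
    forall (xbar0 : 'rV[R]_n) (vbar : nat -> 'rV[R]_r),
      Xs xbar0 -> (forall i, Vs (vbar i)) ->
    forall x u w v y, solution f h Xs Us Vs Ys x u w v y ->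
    forall sol : nat -> cand R n q r,
      mhe_run f h Xs Vs Ys mu al2 sigv sigy N xbar0 vbar u y sol ->
    forall k : nat,
      be `|x k - mhe_estimate f N u sol k|
        <= be0 `|x 0 - xbar0| k
           + \sum_(i < k.+1) bev `|v (k - i)%N - vbar (k - i)%N| i].
Proof.
case: HN => rho [/andP[r0 r1] HNr].
have /andP[mu0 mu1] := Hmu.
have [Ka1 _] := Hal1. have [Ka2 _] := Hal2.
have Nr0 : 0 < (N.+1)%:R :> R by rewrite ltr0n.
pose a := (1 - rho) / (2 * (N.+1)%:R).
have aN : a * (2 * (N.+1)%:R) = 1 - rho by rewrite /a; field; lra.
have a0 : 0 < a by rewrite /a divr_gt0 //; lra.
have NE : (N.+1)%:R = N%:R + 1 :> R by rewrite -natr1.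
have Nn0 : 0 <= N%:R :> R by [].
have a1 : a <= 1 by move: aN; rewrite NE; nra.
pose lam := 1 - a.
have lam01 : 0 < lam < 1.
  apply/andP; split; rewrite /lam; last lra.
  move: aN; rewrite NE; nra.
have lamN : (1 + rho) / 2 <= lam ^+ N.
  have := bern N (_ : 0 <= a <= 1); rewrite -/lam => B.
  have := B (ltac:(apply/andP; split; lra)).
  move: aN; rewrite NE; nra.
pose C := 8 / (mu * (1 - rho)).
have C0 : 0 < C by rewrite /C divr_gt0 // mulr_gt0 //; lra.
exists al1, (fun s t => 4 * lam ^+ t * al2 (2 * s)), (fun s t => C * lam ^+ t * sigv (2 * s)).
split => //.
- by apply: KL_geo => //.
- by apply: summable_geo.
move=> xbar0 vbar Hxb Hvb x u w v y Hsol sol Hrun k.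
have HVs1 : forall x xt, Xs x -> Xs xt -> al1 `|x - xt| <= Vf x xt.
  by move=> ? ? X1 X2; have [] := HVsand _ _ X1 X2.
have HVs2 : forall x xt, Xs x -> Xs xt -> Vf x xt <= al2 `|x - xt|.
  by move=> ? ? X1 X2; have [] := HVsand _ _ X1 X2.
have OS := one_step Ka2 Hsigv Hsigy Hmu HVs2 HVdec Hsol Hrun.
have Xest : forall t, Xs (mhe_estimate f N u sol t).
  by move=> t; have [Hf' _] := Hrun t; have [] := Hf' (Nk N t) (leqnn _).
have XP : forall t, Xs (mhe_prior f N xbar0 u sol t).
  by move=> t; rewrite /mhe_prior; case: eqP.
have Xx : forall t, Xs (x t) by move=> t; have [[]] := Hsol t.
have HL : forall t, 2 * mu ^+ N * al2 (2 * `|x t - mhe_prior f N xbar0 u sol t|)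
    <= rho * Vf (x t) (mhe_prior f N xbar0 u sol t).
  by move=> t; apply: (HNlink (Xs:=Xs) Hal1 Ka2 mu0 HVs1 HNr (Xx t) (XP t)).
have Pk : forall t, (0 < t)%N -> mhe_prior f N xbar0 u sol t = mhe_estimate f N u sol t.
  by move=> [|t].
have P0 : mhe_prior f N xbar0 u sol 0 = xbar0 by [].
pose S t := sigv (2 * `|v t - vbar t|).
have S0 : forall t, 0 <= S t.
  by move=> t; apply: K_ge0 => //; rewrite mulr_ge0.
pose A := al2 (2 * `|x 0%N - xbar0|).
have A0 : 0 <= A by apply: K_ge0 => //; rewrite mulr_ge0.
have W0 : Vf (x 0%N) (mhe_prior f N xbar0 u sol 0) <= A.
  rewrite P0; apply: le_trans (HVs2 _ _ (Xx 0%N) Hxb) _.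
  apply: K_le => //; have := normr_ge0 (x 0%N - xbar0); lra.
pose g i := C * lam ^+ i.
pose d j := 4 * mu ^+ j / mu.
pose Y := mu^-1.
have Y0 : 0 < Y by rewrite invr_gt0.
have CY : C * (1 - rho) = 8 * Y by rewrite /C /Y; field; apply/andP; split; lra.
have dY : forall j, d j = 4 * (mu ^+ j * Y) by move=> j; rewrite /d /Y; ring.
have muj : forall j, mu ^+ j * Y <= Y.
  move=> j; apply: ler_piMl; [exact: ltW | exact: exprn_ile1 (ltW mu0) (ltW mu1)].
have lamj : forall j, (j <= N)%N -> (1 + rho) / 2 <= lam ^+ j.
  move=> j jN; apply: le_trans lamN _; apply: ler_wiXn2l => //; case/andP: lam01 => *; lra.
have dg : forall j, (j <= N)%N -> d j <= g j.
  move=> j jN; rewrite dY /g; have := muj j; have := lamj j jN.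
  move=> L M; have : C * ((1 + rho) / 2) <= C * lam ^+ j by rewrite ler_pM2l.
  move: CY; nra.
have HNc : rho * g 0%N + d N <= g N.
  rewrite dY /g expr0 mulr1; have := muj N.
  have : C * ((1 + rho) / 2) <= C * lam ^+ N by rewrite ler_pM2l.
  move: CY; nra.
have Hgc : forall i, rho * g i.+1 <= g (N + i.+1)%N.
  move=> i; rewrite /g exprD.
  have li : 0 <= lam ^+ i.+1 by rewrite exprn_ge0 //; case/andP: lam01 => *; lra.
  have : rho <= lam ^+ N by lra.
  move=> H; have := ler_wpM2r li H; have := ltW C0; nra.
have lamk0 : forall k, 0 <= lam ^+ k.
  by move=> k'; apply: exprn_ge0; case/andP: lam01 => *; lra.
pose B k := 4 * lam ^+ k * A + \sum_(i < k.+1) g i * S (k - i)%N.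
have Bge : forall k, 4 * lam ^+ k * A <= B k.
  move=> k'; rewrite /B lerDl; apply: sumr_ge0 => i _.
  by apply: mulr_ge0 => //; rewrite /g; apply: mulr_ge0 => //; exact: ltW.
suff main : forall k, Vf (x k) (mhe_estimate f N u sol k) <= B k.
  apply: le_trans (HVs1 _ _ (Xx k) (Xest k)) _; exact: main.
have Hrho : 0 <= rho by lra.
case: (posnP N) => [N0|Npos].
  subst N.
  move=> k'; have OSk := OS k'; have HLk := HL k'.
  move: OSk HLk; rewrite /Nk min0n subn0 big_ord1 subn0 !expr0 => OSk HLk.
  have Dk : 4 * 1 / mu * sigv (2 * `|v k' - vbar k'|) <= g 0%N * S k'.
    have := dg 0%N (leq0n 0); rewrite /d expr0 => H.
    exact: (ler_wpM2r (S0 k') H).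
  have gk : g 0%N * S k' <= B k'.
    rewrite /B big_ord_recl subn0 /=.
    have : 0 <= \sum_(i < k') g (bump 0 i) * S (k' - bump 0 i)%N.
      apply: sumr_ge0 => i _; apply: mulr_ge0 => //; apply: mulr_ge0 => //; exact: ltW.
    have := lamk0 k'; nra.
  case: k' OSk HLk Dk gk => [|k'] OSk HLk Dk gk.
    have := W0; rewrite /B big_ord1 subn0 expr0.
    move: Dk; nra.
  rewrite Pk // in HLk.
  set E := Vf _ _ in OSk HLk *.
  have gS0 : 0 <= g 0%N * S k'.+1 by apply: mulr_ge0 => //; rewrite /g expr0 mulr1 ltW.
  have : (1 - rho) * E <= (1 - rho) * (g 0%N * S k'.+1).
    have e : (1 - rho) * (g 0%N * S k'.+1) = 8 * Y * S k'.+1.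
      by rewrite /g expr0 mulr1 mulrA [(1 - rho) * C]mulrC CY.
    rewrite e; move: Dk; rewrite /g expr0 mulr1 => Dk.
    have e2 : 4 * 1 / mu * sigv (2 * `|v k'.+1 - vbar k'.+1|) = 4 * Y * S k'.+1.
      by rewrite /Y /S; ring.
    rewrite e2 in OSk; have := S0 k'.+1; have := Y0; move: HLk; nra.
  rewrite ler_pM2l; last lra.
  move=> H; exact: le_trans H gk.
elim/ltn_ind => k' IH.
case: (ltnP k' N) => kN.
  have NkE : Nk N k' = k' by rewrite /Nk; apply/minn_idPr; exact: ltnW.
  have OSk := OS k'; rewrite NkE subnn P0 in OSk.
  have Sb : \sum_(j < k'.+1) 4 * mu ^+ j / mu * sigv (2 * `|v (k' - j)%N - vbar (k' - j)%N|)
      <= \sum_(i < k'.+1) g i * S (k' - i)%N.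
    apply: ler_sum => j _; apply: ler_wpM2r; first exact: S0.
    apply: (dg j); apply: (leq_trans _ (ltnW kN)); rewrite -ltnS; exact: ltn_ord.
  have mk : mu ^+ k' <= 1 by apply: exprn_ile1; lra.
  have lk := lamj k' (ltnW kN).
  have mk0 : 0 <= mu ^+ k' by apply: exprn_ge0; lra.
  rewrite /B; apply: le_trans OSk _; rewrite -/A; apply: lerD => //.
  exact: (helper1 A0 mk0 mk Hrho lk).
have NkE : Nk N k' = N by rewrite /Nk; apply/minn_idPl.
have [K kE] : exists K, k' = (N + K)%N by exists (k' - N)%N; rewrite subnKC.
subst k'.
have OSk := OS (N + K)%N; rewrite NkE addKn in OSk.
have HLK := HL K.
have WK : Vf (x K) (mhe_prior f N xbar0 u sol K) <= B K.
  case: (posnP K) => [K0|Kp].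
    subst K; apply: le_trans W0 _; apply: le_trans (Bge 0%N); rewrite expr0; lra.
  rewrite Pk //; apply: IH; by rewrite -{1}(add0n K) ltn_add2r.
have SC := @sum_comb R g d S rho N K Hrho S0 (fun j jN => dg j (ltnW jN)) HNc Hgc.
have lamNK : rho * (4 * lam ^+ K * A) <= 4 * lam ^+ (N + K) * A.
  rewrite exprD; have := lamk0 K; have : rho <= lam ^+ N by lra.
  move=> H1 H2; have := ler_wpM2r H2 H1; nra.
rewrite /B in WK *.
exact: (helper2 OSk HLK WK lamNK SC Hrho).
Qed.
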